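(* Fix real numbers $S_1>0$ and $t>0$. For $S_2\ge 0$ define $$R_{DF}(S_2)=\frac12\max_{0\le\rho\le1}\min\Big\{C(tS_1)+C\big((1-\rho^2)S_1\big),\;C(S_1)+C\big(S_1+S_2+2\rho\sqrt{S_1S_2}\big)\Big\},$$ $$R_{CF}(S_2)=\frac12C(S_1)+\frac12C\Big(S_1+\frac{tS_1S_2}{1+(t+1)S_1+S_2}\Big),$$ where $C(x)=\log_2(1+x)$. Then both $R_{DF}$ and $R_{CF}$ are concave functions of $S_2$ on $[0,\infty)$.
   Context: These are the Decode-and-Forward (DF) and Compress-and-Forward (CF) achievable rates of a half-duplex Gaussian relay channel in one fading block, where $S_1=|h_{31}|^2P_1$ is the source–destination SNR, $t=|h_{21}|^2/|h_{31}|^2$ is the ratio of source–relay to source–destination channel power gains, and $S_2=2|h_{32}|^2P_2$ is the relay–destination SNR with relay power $P_2$. *)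

(* Defs.v *)
From Stdlib Require Import Reals ClassicalEpsilon.
Open Scope R_scope.

Definition Cap (x : R) : R := ln (1 + x) / ln 2.

Definition DF_inner (S1 t S2 rho : R) : R :=
  Rmin (Cap (t * S1) + Cap ((1 - rho ^ 2) * S1))
       (Cap S1 + Cap (S1 + S2 + 2 * rho * sqrt (S1 * S2))).

(* For continuous g
   (as here) the supremum is attained, so this is the maximum. *)
Definition max01 (g : R -> R) : R :=
  epsilon (inhabits 0)
    (fun m => is_lub (fun y => exists rho, 0 <= rho <= 1 /\ y = g rho) m).

Definition R_DF (S1 t S2 : R) : R := / 2 * max01 (DF_inner S1 t S2).

Definition R_CF (S1 t S2 : R) : R :=
  / 2 * Cap S1 + / 2 * Cap (S1 + t * S1 * S2 / (1 + (t + 1) * S1 + S2)).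

Definition concave_on_nonneg (f : R -> R) : Prop :=
  forall x y l, 0 <= x -> 0 <= y -> 0 <= l <= 1 ->
    l * f x + (1 - l) * f y <= f (l * x + (1 - l) * y).

(* Main.v *)
Require Import Defs.
From Stdlib Require Import Reals ClassicalEpsilon Lra Psatz.
Open Scope R_scope.

Lemma ln_le_mono x y : 0 < x -> x <= y -> ln x <= ln y.
Proof.
  intros Hx Hxy. destruct (Rle_lt_or_eq_dec _ _ Hxy) as [H|H].
  - left. apply ln_increasing; lra.
  - subst; lra.
Qed.

Lemma ln_le_sub1 x : 0 < x -> ln x <= x - 1.
Proof.
  intros Hx. rewrite <- (ln_exp (x - 1)). apply ln_le_mono; auto.
  pose proof (exp_ineq1_le (x - 1)). lra.
Qed.

Lemma ln_concave u v l : 0 < u -> 0 < v -> 0 <= l <= 1 ->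
  l * ln u + (1 - l) * ln v <= ln (l * u + (1 - l) * v).
Proof.
  intros Hu Hv Hl. set (m := l * u + (1 - l) * v).
  assert (Hm : 0 < m).
  { unfold m. destruct (Rle_lt_or_eq_dec 0 l) as [Hl0|Hl0]; [lra| |].
    - assert (0 < l * u) by (apply Rmult_lt_0_compat; lra).
      assert (0 <= (1 - l) * v) by (apply Rmult_le_pos; lra). lra.
    - subst l. lra. }
  assert (E : forall a, 0 < a -> ln a - ln m <= a / m - 1).
  { intros a Ha. replace (ln a - ln m) with (ln (a / m)).
    - apply ln_le_sub1. apply Rdiv_lt_0_compat; lra.
    - unfold Rdiv. rewrite ln_mult, ln_Rinv; try lra. apply Rinv_0_lt_compat; lra. }
  pose proof (E u Hu) as Eu. pose proof (E v Hv) as Ev.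
  assert (l * (ln u - ln m) + (1 - l) * (ln v - ln m)
          <= l * (u / m - 1) + (1 - l) * (v / m - 1)).
  { apply Rplus_le_compat; apply Rmult_le_compat_l; lra. }
  assert (l * (u / m - 1) + (1 - l) * (v / m - 1) = 0).
  { unfold m. field. fold m. lra. }
  lra.
Qed.

Lemma ln2_pos : 0 < ln 2.
Proof. pose proof ln_lt_2. lra. Qed.

Lemma Cap_mono u v : 0 <= u -> u <= v -> Cap u <= Cap v.
Proof.
  intros Hu Huv. unfold Cap, Rdiv. apply Rmult_le_compat_r.
  - left. apply Rinv_0_lt_compat, ln2_pos.
  - apply ln_le_mono; lra.
Qed.

Lemma Cap_concave u v l : 0 <= u -> 0 <= v -> 0 <= l <= 1 ->
  l * Cap u + (1 - l) * Cap v <= Cap (l * u + (1 - l) * v).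
Proof.
  intros Hu Hv Hl. unfold Cap, Rdiv.
  replace (1 + (l * u + (1 - l) * v)) with (l * (1 + u) + (1 - l) * (1 + v)) by ring.
  pose proof (ln_concave (1 + u) (1 + v) l ltac:(lra) ltac:(lra) Hl).
  pose proof (Rinv_0_lt_compat _ ln2_pos).
  replace (l * (ln (1 + u) * / ln 2) + (1 - l) * (ln (1 + v) * / ln 2))
    with ((l * ln (1 + u) + (1 - l) * ln (1 + v)) * / ln 2) by ring.
  apply Rmult_le_compat_r; lra.
Qed.

Lemma frac_concave a x y l : 0 < a -> 0 <= x -> 0 <= y -> 0 <= l <= 1 ->
  l * (x / (a + x)) + (1 - l) * (y / (a + y)) <=
  (l * x + (1 - l) * y) / (a + (l * x + (1 - l) * y)).
Proof.
  intros Ha Hx Hy Hl.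
  set (p := a + x). set (q := a + y).
  assert (Hp : 0 < p) by (unfold p; lra). assert (Hq : 0 < q) by (unfold q; lra).
  assert (Hr : 0 < l * p + (1 - l) * q).
  { destruct (Rle_lt_or_eq_dec 0 l) as [Hl0|Hl0]; [lra| |].
    - assert (0 < l * p) by (apply Rmult_lt_0_compat; lra).
      assert (0 <= (1 - l) * q) by (apply Rmult_le_pos; lra). lra.
    - subst l. lra. }
  assert (D : l / p + (1 - l) / q - 1 / (l * p + (1 - l) * q)
              = l * (1 - l) * (p - q) ^ 2 / (p * q * (l * p + (1 - l) * q))).
  { field. lra. }
  assert (Dn : 0 <= l * (1 - l) * (p - q) ^ 2 / (p * q * (l * p + (1 - l) * q))).
  { apply Rmult_le_pos.
    { apply Rmult_le_pos; [apply Rmult_le_pos; lra | apply pow2_ge_0]. }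
    left. apply Rinv_0_lt_compat. apply Rmult_lt_0_compat; [apply Rmult_lt_0_compat|]; lra. }
  assert (E1 : x / p = 1 - a * (1 / p)) by (unfold p; field; lra).
  assert (E2 : y / q = 1 - a * (1 / q)) by (unfold q; field; lra).
  assert (E3 : (l * x + (1 - l) * y) / (a + (l * x + (1 - l) * y))
               = 1 - a * (1 / (l * p + (1 - l) * q))).
  { unfold p, q. field. unfold p, q in Hr. lra. }
  rewrite E1, E2, E3.
  assert (l / p + (1 - l) / q = l * (1 / p) + (1 - l) * (1 / q)) by (field; lra).
  nra.
Qed.

Lemma CF_concave S1 t : 0 < S1 -> 0 < t -> concave_on_nonneg (R_CF S1 t).
Proof.
  intros hS1 ht x y l Hx Hy Hl. unfold R_CF.
  set (a := 1 + (t + 1) * S1).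
  assert (Ha : 0 < a) by (unfold a; nra).
  assert (G : forall s, 0 <= s -> S1 + t * S1 * s / (a + s)
                                 = S1 + t * S1 * (s / (a + s))).
  { intros s Hs. unfold a in *. field. lra. }
  assert (Hz : 0 <= l * x + (1 - l) * y) by nra.
  rewrite (G x Hx), (G y Hy), (G _ Hz).
  assert (P : forall s, 0 <= s -> 0 <= s / (a + s)).
  { intros s Hs. apply Rmult_le_pos; auto. left; apply Rinv_0_lt_compat; lra. }
  assert (Hts : 0 < t * S1) by nra.
  pose proof (P x Hx). pose proof (P y Hy).
  pose proof (Cap_concave (S1 + t * S1 * (x / (a + x))) (S1 + t * S1 * (y / (a + y))) l
     ltac:(nra) ltac:(nra) Hl).
  pose proof (frac_concave a x y l Ha Hx Hy Hl).
  assert (Cap (l * (S1 + t * S1 * (x / (a + x))) + (1 - l) * (S1 + t * S1 * (y / (a + y))))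
          <= Cap (S1 + t * S1 * ((l * x + (1 - l) * y) / (a + (l * x + (1 - l) * y))))).
  { set (X := x / (a + x)) in *. set (Y := y / (a + y)) in *.
    set (Z := (l * x + (1 - l) * y) / (a + (l * x + (1 - l) * y))) in *.
    assert (0 <= t * S1 * X) by (apply Rmult_le_pos; lra).
    assert (0 <= t * S1 * Y) by (apply Rmult_le_pos; lra).
    apply Cap_mono.
    - apply Rplus_le_le_0_compat; apply Rmult_le_pos; lra.
    - assert (t * S1 * (l * X + (1 - l) * Y) <= t * S1 * Z)
        by (apply Rmult_le_compat_l; lra).
      replace (l * (S1 + t * S1 * X) + (1 - l) * (S1 + t * S1 * Y))
        with (S1 + t * S1 * (l * X + (1 - l) * Y)) by ring. lra. }
  lra.
Qed.

Lemma max01_lub g M : (forall r, 0 <= r <= 1 -> g r <= M) ->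
  is_lub (fun y => exists rho, 0 <= rho <= 1 /\ y = g rho) (max01 g).
Proof.
  intros HM. unfold max01. apply epsilon_spec.
  destruct (completeness (fun y => exists rho, 0 <= rho <= 1 /\ y = g rho)) as [m Hm].
  - exists M. intros y [r [Hr ->]]. auto.
  - exists (g 0). exists 0. split; [lra|auto].
  - exists m; auto.
Qed.

Lemma DF_bound S1 t s r : 0 < S1 -> 0 < t -> 0 <= r <= 1 ->
  DF_inner S1 t s r <= Cap (t * S1) + Cap S1.
Proof.
  intros hS1 ht Hr. unfold DF_inner. eapply Rle_trans. apply Rmin_l.
  apply Rplus_le_compat_l.
  assert (0 <= r * r <= 1) by (split; [apply Rmult_le_pos|]; nra).
  replace (r ^ 2) with (r * r) by ring.
  apply Cap_mono.
  - apply Rmult_le_pos; lra.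
  - assert ((1 - r * r) * S1 <= 1 * S1) by (apply Rmult_le_compat_r; lra). lra.
Qed.

Lemma rho3_exists x y l r1 r2 : 0 <= x -> 0 <= y -> 0 < l < 1 ->
  0 <= r1 <= 1 -> 0 <= r2 <= 1 ->
  exists r3, 0 <= r3 /\ r3 * sqrt (l * x + (1 - l) * y) =
     l * (r1 * sqrt x) + (1 - l) * (r2 * sqrt y)
     /\ r3 ^ 2 <= l * r1 ^ 2 + (1 - l) * r2 ^ 2.
Proof.
  intros Hx Hy Hl H1 H2. set (z := l * x + (1 - l) * y).
  assert (Hz : 0 <= z) by (unfold z; nra).
  destruct (Rle_lt_or_eq_dec _ _ Hz) as [Hzp|Hz0].
  - set (a := sqrt x). set (b := sqrt y).
    assert (Ha : 0 <= a) by apply sqrt_pos. assert (Hb : 0 <= b) by apply sqrt_pos.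
    assert (Ea : x = a * a) by (unfold a; rewrite sqrt_sqrt; lra).
    assert (Eb : y = b * b) by (unfold b; rewrite sqrt_sqrt; lra).
    set (sz := sqrt z).
    assert (Hsz : 0 < sz) by (apply sqrt_lt_R0; lra).
    assert (Ez : z = sz * sz) by (unfold sz; rewrite sqrt_sqrt; lra).
    set (w := l * (r1 * a) + (1 - l) * (r2 * b)).
    exists (w / sz). split; [|split].
    + apply Rmult_le_pos. unfold w.
      apply Rplus_le_le_0_compat; repeat apply Rmult_le_pos; lra. left; apply Rinv_0_lt_compat; lra.
    + field. lra.
    + assert (CS : w ^ 2 <= (l * r1 ^ 2 + (1 - l) * r2 ^ 2) * z).
      { unfold z, w. rewrite Ea, Eb.
        assert (w ^ 2 = w ^ 2) by reflexivity.
        assert (D : (l * r1 ^ 2 + (1 - l) * r2 ^ 2) * (l * (a * a) + (1 - l) * (b * b))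
                    - (l * (r1 * a) + (1 - l) * (r2 * b)) ^ 2
                    = l * (1 - l) * (r1 * b - r2 * a) ^ 2) by ring.
        assert (0 <= l * (1 - l) * (r1 * b - r2 * a) ^ 2)
          by (apply Rmult_le_pos; [apply Rmult_le_pos; lra| apply pow2_ge_0]). lra. }
      replace ((w / sz) ^ 2) with (w ^ 2 / z) by (rewrite Ez; field; lra).
      apply Rmult_le_reg_r with z; [lra|].
      unfold Rdiv. rewrite Rmult_assoc, Rinv_l; lra.
  - unfold z in Hz0.
    assert (0 <= l * x) by (apply Rmult_le_pos; lra).
    assert (0 <= (1 - l) * y) by (apply Rmult_le_pos; lra).
    assert (Ex : l * x = 0) by lra. assert (Ey : (1 - l) * y = 0) by lra.
    assert (x = 0).
    { destruct (Rmult_integral _ _ Ex); lra. }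
    assert (y = 0).
    { destruct (Rmult_integral _ _ Ey); lra. }
    subst x y. exists 0. replace (l * 0 + (1 - l) * 0) with 0 by ring. rewrite sqrt_0.
    split; [lra|split]; [ring|].
    assert (0 <= l * r1 ^ 2) by (apply Rmult_le_pos; [lra|apply pow2_ge_0]).
    assert (0 <= (1 - l) * r2 ^ 2) by (apply Rmult_le_pos; [lra|apply pow2_ge_0]).
    replace (0 ^ 2) with 0 by ring. lra.
Qed.

Lemma sq01 r : 0 <= r <= 1 -> 0 <= r ^ 2 <= 1.
Proof.
  intros H. replace (r ^ 2) with (r * r) by ring. split.
  - apply Rmult_le_pos; lra.
  - assert (r * r <= 1 * 1) by (apply Rmult_le_compat; lra). lra.
Qed.

Lemma le1_of_sq r : 0 <= r -> r ^ 2 <= 1 -> r <= 1.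
Proof.
  intros H0 H. destruct (Rle_lt_dec r 1) as [h|h]; auto.
  assert (1 * 1 < r * r) by (apply Rmult_le_0_lt_compat; lra).
  replace (r ^ 2) with (r * r) in H by ring. lra.
Qed.

Lemma DF_step S1 t x y l r1 r2 : 0 < S1 -> 0 < t -> 0 <= x -> 0 <= y -> 0 < l < 1 ->
  0 <= r1 <= 1 -> 0 <= r2 <= 1 ->
  exists r3, 0 <= r3 <= 1 /\
    l * DF_inner S1 t x r1 + (1 - l) * DF_inner S1 t y r2
    <= DF_inner S1 t (l * x + (1 - l) * y) r3.
Proof.
  intros hS1 ht Hx Hy Hl H1 H2.
  destruct (rho3_exists x y l r1 r2 Hx Hy Hl H1 H2) as [r3 [H3 [E3 Q3]]].
  pose proof (sq01 r1 H1) as Q1. pose proof (sq01 r2 H2) as Q2.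
  assert (Qm : 0 <= l * r1 ^ 2 + (1 - l) * r2 ^ 2 <= 1).
  { assert (l * r1 ^ 2 <= l * 1) by (apply Rmult_le_compat_l; lra).
    assert ((1 - l) * r2 ^ 2 <= (1 - l) * 1) by (apply Rmult_le_compat_l; lra).
    assert (0 <= l * r1 ^ 2) by (apply Rmult_le_pos; lra).
    assert (0 <= (1 - l) * r2 ^ 2) by (apply Rmult_le_pos; lra). lra. }
  assert (Hr3 : r3 <= 1) by (apply le1_of_sq; lra).
  exists r3. split; [lra|]. unfold DF_inner.
  assert (Hz : 0 <= l * x + (1 - l) * y).
  { assert (0 <= l * x) by (apply Rmult_le_pos; lra).
    assert (0 <= (1 - l) * y) by (apply Rmult_le_pos; lra). lra. }
  set (A1 := Cap (t * S1) + Cap ((1 - r1 ^ 2) * S1)).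
  set (A2 := Cap (t * S1) + Cap ((1 - r2 ^ 2) * S1)).
  set (B1 := Cap S1 + Cap (S1 + x + 2 * r1 * sqrt (S1 * x))).
  set (B2 := Cap S1 + Cap (S1 + y + 2 * r2 * sqrt (S1 * y))).
  assert (M1 : l * Rmin A1 B1 + (1 - l) * Rmin A2 B2 <= l * A1 + (1 - l) * A2).
  { apply Rplus_le_compat; apply Rmult_le_compat_l; try lra; apply Rmin_l. }
  assert (M2 : l * Rmin A1 B1 + (1 - l) * Rmin A2 B2 <= l * B1 + (1 - l) * B2).
  { apply Rplus_le_compat; apply Rmult_le_compat_l; try lra; apply Rmin_r. }
  apply Rmin_glb.
  - eapply Rle_trans; [apply M1|]. unfold A1, A2.
    assert (P1 : 0 <= (1 - r1 ^ 2) * S1) by (apply Rmult_le_pos; lra).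
    assert (P2 : 0 <= (1 - r2 ^ 2) * S1) by (apply Rmult_le_pos; lra).
    pose proof (Cap_concave ((1 - r1 ^ 2) * S1) ((1 - r2 ^ 2) * S1) l P1 P2 ltac:(lra)).
    assert (Cap (l * ((1 - r1 ^ 2) * S1) + (1 - l) * ((1 - r2 ^ 2) * S1)) <= Cap ((1 - r3 ^ 2) * S1)).
    { replace (l * ((1 - r1 ^ 2) * S1) + (1 - l) * ((1 - r2 ^ 2) * S1))
        with ((1 - (l * r1 ^ 2 + (1 - l) * r2 ^ 2)) * S1) by ring.
      apply Cap_mono.
      - apply Rmult_le_pos; lra.
      - apply Rmult_le_compat_r; lra. }
    lra.
  - eapply Rle_trans; [apply M2|]. unfold B1, B2.
    rewrite !sqrt_mult by lra.
    replace (S1 + (l * x + (1 - l) * y) + 2 * r3 * (sqrt S1 * sqrt (l * x + (1 - l) * y)))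
      with (l * (S1 + x + 2 * r1 * (sqrt S1 * sqrt x)) + (1 - l) * (S1 + y + 2 * r2 * (sqrt S1 * sqrt y))).
    2:{ replace (2 * r3 * (sqrt S1 * sqrt (l * x + (1 - l) * y)))
          with (2 * sqrt S1 * (r3 * sqrt (l * x + (1 - l) * y))) by ring.
        rewrite E3. ring. }
    pose proof (sqrt_pos S1). pose proof (sqrt_pos x). pose proof (sqrt_pos y).
    assert (P1 : 0 <= S1 + x + 2 * r1 * (sqrt S1 * sqrt x)).
    { assert (0 <= 2 * r1 * (sqrt S1 * sqrt x)) by (repeat apply Rmult_le_pos; lra). lra. }
    assert (P2 : 0 <= S1 + y + 2 * r2 * (sqrt S1 * sqrt y)).
    { assert (0 <= 2 * r2 * (sqrt S1 * sqrt y)) by (repeat apply Rmult_le_pos; lra). lra. }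
    pose proof (Cap_concave _ _ l P1 P2 ltac:(lra)). lra.
Qed.

Lemma DF_concave S1 t : 0 < S1 -> 0 < t -> concave_on_nonneg (R_DF S1 t).
Proof.
  intros hS1 ht x y l Hx Hy Hl. unfold R_DF.
  set (M := Cap (t * S1) + Cap S1).
  assert (L : forall s, is_lub (fun v => exists rho, 0 <= rho <= 1 /\ v = DF_inner S1 t s rho)
                        (max01 (DF_inner S1 t s))).
  { intros s. apply max01_lub with M. intros r Hr. apply DF_bound; auto. }
  destruct Hl as [Hl0 Hl1].
  destruct (Rle_lt_or_eq_dec _ _ Hl0) as [Hl0'|E0].
  2:{ subst l. replace (0 * x + (1 - 0) * y) with y by ring. lra. }
  destruct (Rle_lt_or_eq_dec _ _ Hl1) as [Hl1'|E1].
  2:{ subst l. replace (1 * x + (1 - 1) * y) with x by ring. lra. }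
  set (z := l * x + (1 - l) * y).
  set (hx := max01 (DF_inner S1 t x)). set (hy := max01 (DF_inner S1 t y)).
  set (hz := max01 (DF_inner S1 t z)).
  destruct (L x) as [Ux Lx]. destruct (L y) as [Uy Ly]. destruct (L z) as [Uz Lz].
  fold hx hy hz in Ux, Lx, Uy, Ly, Uz, Lz.
  assert (K : forall r1 r2, 0 <= r1 <= 1 -> 0 <= r2 <= 1 ->
            l * DF_inner S1 t x r1 + (1 - l) * DF_inner S1 t y r2 <= hz).
  { intros r1 r2 H1 H2.
    destruct (DF_step S1 t x y l r1 r2 hS1 ht Hx Hy ltac:(lra) H1 H2) as [r3 [H3 Hs]].
    eapply Rle_trans; [apply Hs|]. apply Uz. exists r3. split; auto. }
  assert (K2 : forall r2, 0 <= r2 <= 1 -> l * hx + (1 - l) * DF_inner S1 t y r2 <= hz).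
  { intros r2 H2.
    assert (hx <= (hz - (1 - l) * DF_inner S1 t y r2) / l).
    { apply Lx. intros v [r1 [H1 ->]]. pose proof (K r1 r2 H1 H2).
      apply Rmult_le_reg_l with l; [lra|].
      replace (l * ((hz - (1 - l) * DF_inner S1 t y r2) / l))
        with (hz - (1 - l) * DF_inner S1 t y r2) by (field; lra). lra. }
    replace (l * hx) with (l * hx) by ring.
    assert (l * hx <= l * ((hz - (1 - l) * DF_inner S1 t y r2) / l))
      by (apply Rmult_le_compat_l; lra).
    replace (l * ((hz - (1 - l) * DF_inner S1 t y r2) / l))
        with (hz - (1 - l) * DF_inner S1 t y r2) in H0 by (field; lra). lra. }
  assert (hy <= (hz - l * hx) / (1 - l)).
  { apply Ly. intros v [r2 [H2 ->]]. pose proof (K2 r2 H2).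
    apply Rmult_le_reg_l with (1 - l); [lra|].
    replace ((1 - l) * ((hz - l * hx) / (1 - l))) with (hz - l * hx) by (field; lra). lra. }
  assert ((1 - l) * hy <= (1 - l) * ((hz - l * hx) / (1 - l)))
    by (apply Rmult_le_compat_l; lra).
  replace ((1 - l) * ((hz - l * hx) / (1 - l))) with (hz - l * hx) in H0 by (field; lra).
  lra.
Qed.

Theorem theorem1 (S1 t : R) (hS1 : 0 < S1) (ht : 0 < t) :
  concave_on_nonneg (R_DF S1 t) /\ concave_on_nonneg (R_CF S1 t).
Proof.
  split; [apply DF_concave | apply CF_concave]; auto.
Qed.
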